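(* Let $O$ be a Hermitian observable with $\|O\|\le1$, and let $\mathcal M$ be the GQPE measurement (with $\kappa=1$, any positive integer $m$ and $\gamma>0$). For any quantum state $\rho$, let $Z$ be the raw readout of applying $\mathcal M$ to $\rho$, and let $Z'$ be the raw readout of applying $\mathcal M$ again to the resulting post-measurement state. Then $|\mathrm{Cov}(Z,Z')|\le\mathbb V[Z]$.
   Context: GQPE measurement: $N=2^{2m}$, $h=2^{-m}$, $\omega_j=(j-N/2)h$ ($j=0,\dots,N-1$), $\xi_\ell=(\ell-N/2)h$, $\widehat g_\gamma(\xi)=(2\sqrt{2\pi}\gamma)^{1/2}e^{-4\pi^2\gamma^2\xi^2}$, $C=(h\sum_{\ell=1}^{N-1}\widehat g_\gamma(\xi_\ell)^2)^{1/2}$, $\tilde O=O/\kappa$, Kraus operators $O_j=\frac{h^{3/2}}{C}\sum_{\ell=1}^{N-1}e^{2\pi i\xi_\ell(\omega_jI-\tilde O)}\widehat g_\gamma(\xi_\ell)$. Applied to $\rho$, index $j$ occurs with probability $\operatorname{tr}(O_j\rho O_j^\dagger)$, post-state $O_j\rho O_j^\dagger/\operatorname{tr}(O_j\rho O_j^\dagger)$, and the raw readout is $Z=\omega_j$ if $|\omega_j|\le2$, else $Z=0$. $\mathrm{Cov}(Z,Z')=\mathbb E[ZZ']-\mathbb E[Z]\mathbb E[Z']$ over the joint distribution of the two successive measurements. *)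

(* Defs.v *)
From mathcomp Require Import all_boot all_algebra.
From mathcomp Require Import all_classical all_reals all_analysis.
From mathcomp Require Import complex.
Import GRing.Theory Num.Theory numFieldNormedType.Exports.

Set Implicit Arguments.
Unset Strict Implicit.
Unset Printing Implicit Defensive.

Local Open Scope ring_scope.
Local Open Scope complex_scope.
Local Open Scope classical_set_scope.

Section GQPE.
Variable R : realType.

(* complex numbers, viewed as a numClosedFieldType (gets a topology) *)
Definition Cx : numClosedFieldType := R[i].

Variable d : nat.

Definition adjmx (p q : nat) (M : 'M[Cx]_(p, q)) : 'M[Cx]_(q, p) :=
  \matrix_(i, j) (M j i)^*.

Definition mexp (A : 'M[Cx]_d) : 'M[Cx]_d :=
  lim ((fun N : nat => \sum_(k < N) (k`!%:R : Cx)^-1 *: A ^+ k) @ \oo).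

Definition hermitian_mx (O : 'M[Cx]_d) : Prop := adjmx O = O.

Definition opnorm_le1 (O : 'M[Cx]_d) : Prop :=
  forall v : 'cV[Cx]_d,
    \sum_(i < d) `|(O *m v) i 0| ^+ 2 <= \sum_(i < d) `|v i 0| ^+ 2.

Definition is_state (rho : 'M[Cx]_d) : Prop :=
  (forall v : 'cV[Cx]_d, 0 <= (adjmx v *m rho *m v) 0 0) /\ \tr rho = 1.

Variables (m : nat) (gamma : R).

Definition NN : nat := (2 ^ (2 * m))%N.
Definition hh : R := ((2 : R) ^+ m)^-1.
Definition omega (j : nat) : R := (j%:R - NN%:R / 2) * hh.
Definition xi (l : nat) : R := (l%:R - NN%:R / 2) * hh.

Definition ghat (x : R) : R :=
  Num.sqrt (2 * Num.sqrt (2 * pi) * gamma) *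
  expR (- (4 * pi ^+ 2 * gamma ^+ 2 * x ^+ 2)).

Definition Cnorm : R :=
  Num.sqrt (hh * \sum_(1 <= l < NN) ghat (xi l) ^+ 2).

(* Kraus operators, with kappa = 1 so that tilde O = O *)
Definition kraus (O : 'M[Cx]_d) (j : nat) : 'M[Cx]_d :=
  ((hh * Num.sqrt hh / Cnorm)%:C : Cx) *:
  \sum_(1 <= l < NN)
     ((ghat (xi l))%:C : Cx) *:
       mexp (((0 +i* (2 * pi * xi l)) : Cx) *: ((omega j)%:C%:M - O)).

Definition outprob (O rho : 'M[Cx]_d) (j : nat) : R :=
  complex.Re (\tr (kraus O j *m rho *m adjmx (kraus O j))).

Definition poststate (O rho : 'M[Cx]_d) (j : nat) : 'M[Cx]_d :=
  (((outprob O rho j)%:C : Cx)^-1) *: (kraus O j *m rho *m adjmx (kraus O j)).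

Definition jointprob (O rho : 'M[Cx]_d) (j k : nat) : R :=
  outprob O rho j * outprob O (poststate O rho j) k.

Definition readout (j : nat) : R :=
  if `|omega j| <= 2 then omega j else 0.

Definition EZ (O rho : 'M[Cx]_d) : R :=
  \sum_(j < NN) outprob O rho j * readout j.
Definition EZ' (O rho : 'M[Cx]_d) : R :=
  \sum_(j < NN) \sum_(k < NN) jointprob O rho j k * readout k.
Definition EZZ' (O rho : 'M[Cx]_d) : R :=
  \sum_(j < NN) \sum_(k < NN) jointprob O rho j k * (readout j * readout k).
Definition CovZZ' (O rho : 'M[Cx]_d) : R :=
  EZZ' O rho - EZ O rho * EZ' O rho.
Definition VarZ (O rho : 'M[Cx]_d) : R :=
  \sum_(j < NN) outprob O rho j * readout j ^+ 2 - EZ O rho ^+ 2.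

End GQPE.

(* Main.v *)
Require Import Defs.
From mathcomp Require Import all_boot all_algebra.
From mathcomp Require Import all_classical all_reals all_analysis.
From mathcomp Require Import complex.
From mathcomp Require Import order ring lra zify.
Import Order.TTheory GRing.Theory Num.Theory numFieldNormedType.Exports.
Local Open Scope ring_scope.
Local Open Scope complex_scope.
Local Open Scope classical_set_scope.
From mathcomp Require Import spectral sesquilinear.


Section S.
Variable R : realType.
Local Notation C := (Cx R).

Lemma normC_real (x : R) : `|(x%:C : C)| = (`|x|)%:C.
Proof. by rewrite /=; simpc; rewrite expr0n /= addr0 sqrtr_sqr. Qed.

Lemma cvg_complex (a b : nat -> R) (la lb : R) :
  a @ \oo --> la -> b @ \oo --> lb ->
  (fun N => (a N +i* b N : C)) @ \oo --> (la +i* lb : C).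
Proof.
move=> /cvgrPdist_lt Ha /cvgrPdist_lt Hb.
apply/cvgrPdist_lt => eps eps0.
have e0 : 0 < complex.Re eps / 2.
  move: eps0; rewrite ltcE => /andP[_ h]; rewrite divr_gt0 //.
have eE : eps = (complex.Re eps)%:C.
  clear e0.
  move: eps0; rewrite ltcE => /andP[/eqP h _]. move: h. case: eps => x y /= ->. by [].
move: (Ha _ e0) (Hb _ e0) => {}Ha {}Hb.
near=> N.
have h1 : `|la - a N| < complex.Re eps / 2 by near: N.
have h2 : `|lb - b N| < complex.Re eps / 2 by near: N.
have -> : (la +i* lb : C) - (a N +i* b N) = (la - a N)%:C + 'i * (lb - b N)%:C.
  by simpc.
apply: (le_lt_trans (ler_normD _ _)).
rewrite normrM normC_real normC_real.
have -> : `|('i : C)| = 1.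
  by rewrite /=; simpc; rewrite expr0n expr1n /= add0r sqrtr1.
rewrite mul1r eE -rmorphD /= ltcR.
by rewrite (splitr (complex.Re eps)) ltrD.
Unshelve. all: by end_near.
Qed.

Lemma ipow_even (t : R) n :
  ((0 +i* t : C) ^+ (n.*2)) = ((-1)^+n * t^+(n.*2)) +i* 0.
Proof.
elim: n => [|n IH]; first by rewrite !expr0 mul1r.
rewrite doubleS 2!exprS IH mulrA; simpc.
congr (_ +i* _); rewrite !exprS; ring.
Qed.

Lemma ipow_odd (t : R) n :
  ((0 +i* t : C) ^+ (n.*2.+1)) = 0 +i* ((-1)^+n * t^+(n.*2.+1)).
Proof.
rewrite exprS ipow_even; simpc.
congr (_ +i* _); rewrite ?exprS; ring.
Qed.

Lemma expterm (t : R) k :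
  (k`!%:R : C)^-1 * (0 +i* t) ^+ k = cos_coeff t k +i* sin_coeff t k.
Proof.
have -> : (k`!%:R : C)^-1 = ((k`!%:R : R)^-1)%:C.
  by rewrite rmorphV ?rmorph_nat // unitfE pnatr_eq0 -lt0n fact_gt0.
rewrite /cos_coeff /sin_coeff /=.
rewrite -[k]odd_double_half; case: (odd k) => /=.
  rewrite add1n ipow_odd -[_%:C * _]/(_ +i* _) odd_double /=.
  rewrite add0n doubleK.
  congr (_ +i* _); rewrite ?(mul0r, mulr0, subr0, mul1r, addr0, subrr) //.
by rewrite mulrC.
rewrite add0n ipow_even; simpc; rewrite odd_double /= doubleK.
congr (_ +i* _); rewrite ?(mul0r, mulr0, subr0, mul1r, addr0, subrr) //.
rewrite -exprnP; ring.
Qed.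

Lemma expi_cvg (t : R) :
  (fun N => \sum_(k < N) (k`!%:R : C)^-1 * (0 +i* t) ^+ k) @ \oo -->
  (cos t +i* sin t : C).
Proof.
have E : (fun N => \sum_(k < N) (k`!%:R : C)^-1 * (0 +i* t) ^+ k) =
   (fun N => (series (cos_coeff t) N +i* series (sin_coeff t) N)).
  apply: funext => N; rewrite /series /= !big_mkord.
  elim: N => [|N IH]; first by rewrite !big_ord0.
  by rewrite !big_ord_recr /= IH expterm.
rewrite E; apply: cvg_complex.
  by rewrite unlock; exact: is_cvg_series_cos_coeff.
by rewrite unlock; exact: is_cvg_series_sin_coeff.
Qed.
End S.

Section Ex.
Variable R : realType.
Local Notation C := (Cx R).
Definition Ex (t : R) : C := cos t +i* sin t.

Lemma ExD x y : Ex (x + y) = Ex x * Ex y.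
Proof. by rewrite /Ex cosD sinD; simpc; congr (_ +i* _); ring. Qed.

Lemma Ex0 : Ex 0 = 1.
Proof. by rewrite /Ex cos0 sin0. Qed.

Lemma ExN x : Ex (- x) = Num.conj (Ex x).
Proof. by rewrite /Ex cosN sinN. Qed.

Lemma ExNK x : Ex (- x) * Ex x = 1.
Proof. by rewrite -ExD addNr Ex0. Qed.

Lemma Ex_natmul x n : Ex (n%:R * x) = Ex x ^+ n.
Proof.
elim: n => [|n IH]; first by rewrite mul0r Ex0 expr0.
by rewrite -addn1 natrD mulrDl mul1r ExD IH exprD expr1.
Qed.

Lemma Ex2pi_nat n : Ex (2 * pi * n%:R) = 1.
Proof.
rewrite mulrC Ex_natmul.
have -> : Ex (2 * pi) = 1.
  by rewrite /Ex mulr_natl cos2pi sin2pi.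
by rewrite expr1n.
Qed.

Lemma Ex_eq1 x : Ex x = 1 -> cos x = 1.
Proof. by rewrite /Ex => -[]. Qed.

Lemma cos_lt1 (y : R) : 0 < y < pi -> cos (2 * y) < 1.
Proof.
move=> /sin_gt0_pi h.
rewrite mulr_natl cos_mulr2n cos2sin2.
have : 0 < sin y ^+ 2 by rewrite exprn_gt0.
lra.
Qed.

Variable m : nat.
Hypothesis m0 : (0 < m)%N.

Lemma hh_gt0 : 0 < hh R m.
Proof. by rewrite /hh invr_gt0 exprn_gt0. Qed.

Lemma NNE : (NN m)%:R = ((2 : R) ^+ m) ^+ 2.
Proof. by rewrite /NN natrX -exprM mulnC. Qed.

Lemma hh2NN : hh R m ^+ 2 * (NN m)%:R = 1.
Proof.
rewrite NNE /hh exprVn mulVf // expf_neq0 // expf_neq0 //.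
Qed.

Lemma NN_gt1 : (1 < NN m)%N.
Proof.
rewrite /NN; case: m m0 => // k _.
rewrite mulnS expnS; have := expn_gt0 2 (2 * k).+1; lia.
Qed.

Lemma dft (l l' : nat) (lam0 : R) : (l < NN m)%N -> (l' < NN m)%N ->
  \sum_(j < NN m) Ex (2 * pi * xi R m l * (omega R m j - lam0)) *
     Ex (- (2 * pi * xi R m l' * (omega R m j - lam0))) =
  if l == l' then (NN m)%:R else 0.
Proof.
move=> hl hl'.
under eq_bigr do rewrite -ExD.
case: eqP => [<-|/eqP neq].
  under eq_bigr do rewrite addrN Ex0.
  by rewrite sumr_const card_ord.
set x := 2 * pi * (l%:R - l'%:R) * hh R m ^+ 2.
set c0 := - (2 * pi * (l%:R - l'%:R) * hh R m * ((NN m)%:R / 2 * hh R m + lam0)).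
have E : forall j : 'I_(NN m),
   2 * pi * xi R m l * (omega R m j - lam0) -
   2 * pi * xi R m l' * (omega R m j - lam0) = (nat_of_ord j)%:R * x + c0.
  by move=> j; rewrite /x /c0 /xi /omega; ring.
under eq_bigr do rewrite E ExD Ex_natmul.
rewrite -mulr_suml.
suff -> : \sum_(i < NN m) Ex x ^+ i = 0 by rewrite mul0r.
have z1 : Ex x ^+ (NN m) = 1.
  rewrite -Ex_natmul.
  have -> : (NN m)%:R * x = 2 * pi * l%:R + - (2 * pi * l'%:R).
    transitivity (2 * pi * (l%:R - l'%:R) * (hh R m ^+ 2 * (NN m)%:R)).
      by rewrite /x; ring.
    by rewrite hh2NN mulr1; ring.
  by rewrite ExD Ex2pi_nat ExN Ex2pi_nat mul1r; rewrite -[Num.conj 1]/(conjc 1) conjc1.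
have zn1 : Ex x != 1.
  apply/negP => /eqP /Ex_eq1.
  have hh2 := hh2NN.
  have hpos : 0 < hh R m ^+ 2 by rewrite exprn_gt0 ?hh_gt0.
  have NNpos : 0 < (NN m)%:R :> R by rewrite ltr0n; apply: leq_trans NN_gt1.
  have pi0 := @pi_gt0 R.
  have [lt|lt|eqll] := ltngtP l l'; last by rewrite eqll eqxx in neq.
  - rewrite -cosN.
    have -> : - x = 2 * (pi * ((l'%:R - l%:R) * hh R m ^+ 2)) by rewrite /x; ring.
    apply/eqP; rewrite lt_eqF // cos_lt1 //.
    have d0 : 0 < l'%:R - l%:R :> R by rewrite subr_gt0 ltr_nat.
    have d1 : l'%:R - l%:R < (NN m)%:R :> R.
      have : (l'%:R : R) < (NN m)%:R by rewrite ltr_nat.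
      have : (0 : R) <= l%:R by [].
      lra.
    apply/andP; split; first by rewrite mulr_gt0 // mulr_gt0.
    rewrite -[X in _ < X]mulr1 ltr_pM2l //.
    apply: (lt_le_trans (_ : _ < (NN m)%:R * hh R m ^+ 2)); first by rewrite ltr_pM2r.
    by rewrite mulrC hh2.
  - rewrite /x.
    have -> : 2 * pi * (l%:R - l'%:R) * hh R m ^+ 2 = 2 * (pi * ((l%:R - l'%:R) * hh R m ^+ 2)) by ring.
    apply/eqP; rewrite lt_eqF // cos_lt1 //.
    have d0 : 0 < l%:R - l'%:R :> R by rewrite subr_gt0 ltr_nat.
    have d1 : l%:R - l'%:R < (NN m)%:R :> R.
      have : (l%:R : R) < (NN m)%:R by rewrite ltr_nat.
      have : (0 : R) <= l'%:R by [].
      lra.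
    apply/andP; split; first by rewrite mulr_gt0 // mulr_gt0.
    rewrite -[X in _ < X]mulr1 ltr_pM2l //.
    apply: (lt_le_trans (_ : _ < (NN m)%:R * hh R m ^+ 2)); first by rewrite ltr_pM2r.
    by rewrite mulrC hh2.
have := subrX1 (Ex x) (NN m); rewrite z1 subrr => /esym /eqP.
by rewrite mulf_eq0 subr_eq0 (negPf zn1) /= => /eqP.
Qed.
End Ex.
Arguments Ex {R}.
Arguments hh_gt0 {R m}.
Arguments NN_gt1 {m}.
Arguments hh2NN {R m}.
Arguments dft {R m}.
Lemma var_eq (R : realType) (I : finType) (p x : I -> R) : \sum_i p i = 1 ->
  \sum_i p i * x i ^+ 2 - (\sum_i p i * x i) ^+ 2 =
  \sum_i p i * (x i - \sum_k p k * x k) ^+ 2.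
Proof.
move=> H; set M := \sum_k p k * x k.
transitivity (\sum_i p i * x i ^+ 2 - M *+ 2 * (\sum_i p i * x i) + M ^+ 2 * \sum_i p i).
  by rewrite H mulr1 -/M; ring.
rewrite mulr_sumr mulr_sumr -sumrB -big_split /=.
by apply: eq_bigr => i _; ring.
Qed.

Section Mat.
Variables (R : realType) (d : nat).
Local Notation C := (Cx R).
Variable O : 'M[C]_d.
Hypothesis HO : adjmx O = O.

Lemma adjmxE p q (M : 'M[C]_(p,q)) : adjmx M = map_mx Num.conj (M^T).
Proof. by apply/matrixP => i j; rewrite !mxE. Qed.

Lemma O_herm : O \is hermsymmx.
Proof. by apply/is_hermitianmxP; rewrite expr0 scale1r -adjmxE HO. Qed.

Definition Pm := spectralmx O.
Definition Dg := spectral_diag O.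
Definition Pa := map_mx Num.conj (Pm^T).

Lemma PPa : Pm *m Pa = 1%:M.
Proof. exact/unitarymxP/spectral_unitarymx. Qed.

Lemma PaP : Pa *m Pm = 1%:M.
Proof. exact/mulmx1C/PPa. Qed.

Lemma O_eq : O = Pa *m diag_mx Dg *m Pm.
Proof.
have := hermitian_normalmx O_herm => /orthomx_spectralP E.
by rewrite {1}E invmx_unitary ?spectral_unitarymx.
Qed.

Definition Q (a : 'I_d) := Pa *m delta_mx a a *m Pm.

Lemma QQ a b : Q a *m Q b = if a == b then Q a else 0.
Proof.
rewrite /Q !mulmxA -[Pa *m _ *m _ *m Pa]mulmxA PPa mulmx1.
rewrite -[Pa *m _ *m _]mulmxA mul_delta_mx_cond.
by case: eqP => [->|_]; rewrite ?mulr1n ?mulr0n ?mulmx0 ?mul0mx.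
Qed.

Lemma sumQ : \sum_a Q a = 1%:M.
Proof.
rewrite /Q -mulmx_suml -mulmx_sumr -mx1_sum_delta mulmx1.
exact: PaP.
Qed.

Definition fc (u : 'I_d -> C) : 'M[C]_d := \sum_a u a *: Q a.

Lemma O_fc : O = fc (fun a => Dg 0 a).
Proof.
rewrite O_eq diag_mx_sum_delta /fc mulmx_sumr mulmx_suml.
by apply: eq_bigr => a _; rewrite -scalemxAr -scalemxAl.
Qed.

Lemma fc_mul u v : fc u *m fc v = fc (fun a => u a * v a).
Proof.
rewrite /fc mulmx_suml; apply: eq_bigr => a _.
rewrite mulmx_sumr (bigD1 a) //= big1 ?addr0.
  by rewrite -scalemxAl -scalemxAr QQ eqxx scalerA mulrC.
by move=> b /negPf ab; rewrite -scalemxAl -scalemxAr QQ eq_sym ab !scaler0.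
Qed.

Lemma fc_const c : fc (fun _ => c) = c%:M.
Proof. by rewrite /fc -scaler_sumr sumQ scalemx1. Qed.

Lemma fcD u v : fc (fun a => u a + v a) = fc u + fc v.
Proof. by rewrite /fc -big_split; apply: eq_bigr => a _; rewrite scalerDl. Qed.

Lemma fcN u : fc (fun a => - u a) = - fc u.
Proof. by rewrite /fc -sumrN; apply: eq_bigr => a _; rewrite scaleNr. Qed.

Lemma fcZ c u : fc (fun a => c * u a) = c *: fc u.
Proof. by rewrite /fc scaler_sumr; apply: eq_bigr => a _; rewrite scalerA. Qed.

Lemma fc_sum (I : Type) (r : seq I) (u : I -> 'I_d -> C) :
  fc (fun a => \sum_(i <- r) u i a) = \sum_(i <- r) fc (u i).
Proof.
elim: r => [|i r IH].
  have -> : (fun a => \sum_(i <- [::]) u i a) = (fun a => (0 : C) * 0).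
    by apply: funext => a; rewrite big_nil mul0r.
  by rewrite fcZ scale0r big_nil.
by rewrite big_cons -IH -fcD; apply: eq_bigr => a _; rewrite big_cons.
Qed.

Lemma fc_exp u k : fc u ^+ k = fc (fun a => u a ^+ k).
Proof.
elim: k => [|k IH].
  by rewrite expr0 -[X in fc X]/(fun a : 'I_d => (1 : C)) fc_const.
by rewrite exprS IH -mulmxE fc_mul; congr fc; apply: funext => a; rewrite exprS.
Qed.

Lemma adj_fc u : adjmx (fc u) = fc (fun a => Num.conj (u a)).
Proof.
rewrite !adjmxE /fc raddf_sum /= map_mx_sum.
apply: eq_bigr => a _.
rewrite linearZ /= map_mxZ; congr (_ *: _).
rewrite /Q !trmx_mul !map_mxM /Pa trmxCK mulmxA; congr (_ *m _ *m _).
by apply/matrixP => i j; rewrite !mxE rmorph_nat andbC.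
Qed.

Lemma Dg_real a : Dg 0 a = (complex.Re (Dg 0 a))%:C.
Proof.
have /mxOverP/(_ 0 a) := hermitian_spectral_diag_real O_herm.
rewrite realE !lecE /=; case: (Dg 0 a) => x y /=.
by move=> /orP[/andP[/eqP -> _]|/andP[/eqP <- _]].
Qed.


Lemma cvg_fc (u : nat -> 'I_d -> C) (l : 'I_d -> C) :
  (forall a, (fun N => u N a) @ \oo --> l a) ->
  (fun N => fc (u N)) @ \oo --> fc l.
Proof.
move=> H; rewrite /fc; elim: (index_enum _) => [|a r IH].
  have -> : (fun N => \sum_(i <- [::]) u N i *: Q i) = (fun N => 0).
    by apply: funext => N; rewrite big_nil.
  by rewrite big_nil; apply: cvg_cst.
have -> : (fun N => \sum_(i <- a :: r) u N i *: Q i) =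
   (fun N => u N a *: Q a + \sum_(i <- r) u N i *: Q i).
  by apply: funext => N; rewrite big_cons.
rewrite big_cons. apply: cvgD; last exact: IH.
exact: (cvgZl (H a)).
Qed.

Lemma mexp_fc (s : 'I_d -> R) :
  mexp (fc (fun a => 0 +i* s a)) = fc (fun a => cos (s a) +i* sin (s a)).
Proof.
rewrite /mexp.
have -> : (fun N : nat => \sum_(k < N) (k`!%:R : C)^-1 *: fc (fun a => 0 +i* s a) ^+ k)
   = (fun N => fc (fun a => \sum_(k < N) (k`!%:R : C)^-1 * (0 +i* s a) ^+ k)).
  apply: funext => N; rewrite fc_sum; apply: eq_bigr => k _.
  by rewrite fc_exp -fcZ.
apply: cvg_lim; first exact: norm_hausdorff.
apply: cvg_fc => a; exact: expi_cvg.
Qed.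

Definition lam a := complex.Re (Dg 0 a).

Variables (m : nat) (gamma : R).

Definition fk (j : nat) (a : 'I_d) : C :=
  ((hh R m * Num.sqrt (hh R m) / Cnorm m gamma)%:C) *
  \sum_(1 <= l < NN m) (ghat gamma (xi R m l))%:C *
      Ex (2 * pi * xi R m l * (omega R m j - lam a)).

Lemma kraus_fc j : kraus m gamma O j = fc (fk j).
Proof.
rewrite /kraus /fk fcZ; congr (_ *: _).
rewrite fc_sum; apply: eq_bigr => l _.
rewrite fcZ; congr (_ *: _).
have -> : (omega R m j)%:C%:M - O = fc (fun a => (omega R m j)%:C - Dg 0 a).
  by rewrite fcD fc_const fcN -O_fc.
rewrite -fcZ.
have -> : (fun a => (0 +i* (2 * pi * xi R m l)) * ((omega R m j)%:C - Dg 0 a)) =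
   (fun a => 0 +i* (2 * pi * xi R m l * (omega R m j - lam a))).
  apply: funext => a; rewrite Dg_real /lam; simpc.
  by congr (_ +i* _); ring.
by rewrite mexp_fc.
Qed.

Definition tq a (S : 'M[C]_d) := \tr (Q a *m S).

Lemma tr_fc u S : \tr (fc u *m S) = \sum_a u a * tq a S.
Proof.
rewrite /fc mulmx_suml raddf_sum; apply: eq_bigr => a _.
by rewrite -scalemxAl /= mxtraceZ.
Qed.

Lemma tr_sand u S v : \tr (fc u *m S *m fc v) = \sum_a u a * v a * tq a S.
Proof.
rewrite mxtrace_mulC mulmxA fc_mul tr_fc; apply: eq_bigr => a _.
by rewrite [v a * _]mulrC.
Qed.

Lemma Q_fc a : Q a = fc (fun b => (b == a)%:R).
Proof.
rewrite /fc (bigD1 a) //= eqxx scale1r big1 ?addr0 //.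
by move=> b /negPf ->; rewrite scale0r.
Qed.

Lemma tq_sand a u S v : tq a (fc u *m S *m fc v) = u a * v a * tq a S.
Proof.
rewrite [LHS]/tq [in LHS]Q_fc !mulmxA fc_mul tr_sand (bigD1 a) //= eqxx mul1r big1 ?addr0 //.
by move=> b /negPf ->; rewrite mul0r !mul0r.
Qed.

Lemma tqZ a c S : tq a (c *: S) = c * tq a S.
Proof. by rewrite /tq -scalemxAr mxtraceZ. Qed.

Lemma tq_sum S : \sum_a tq a S = \tr S.
Proof. by rewrite /tq -raddf_sum /= -mulmx_suml sumQ mul1mx. Qed.

Lemma tq_state a (rho : 'M[C]_d) : is_state rho ->
  tq a rho = (complex.Re (tq a rho))%:C /\ 0 <= complex.Re (tq a rho).
Proof.
move=> [Hpos _].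
pose v : 'cV[C]_d := Pa *m delta_mx a 0.
have Hv : adjmx v = delta_mx 0 a *m Pm.
  rewrite adjmxE /v trmx_mul map_mxM /Pa trmxCK.
  congr (_ *m _); apply/matrixP => i j; rewrite !mxE rmorph_nat.
  by rewrite andbC.
have E : tq a rho = (adjmx v *m rho *m v) 0 0.
  rewrite /tq /Q -[delta_mx a a](mul_delta_mx (0 : 'I_1)) Hv /v.
  rewrite mulmxA -[Pa *m _ *m _ *m _ *m _]mulmxA -[Pa *m _ *m _ *m _]mulmxA.
  rewrite mxtrace_mulC /mxtrace big_ord1 !mulmxA //.
have := Hpos v; rewrite -E; case: (tq a rho) => x y.
rewrite lecE /= => /andP[/eqP -> h]; by split.
Qed.

Definition qq j a : R := complex.Re (fk j a) ^+ 2 + complex.Im (fk j a) ^+ 2.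

Lemma qq_ge0 j a : 0 <= qq j a.
Proof. by rewrite /qq addr_ge0 ?sqr_ge0. Qed.

Lemma fk_conj j a : fk j a * Num.conj (fk j a) = (qq j a)%:C.
Proof.
rewrite /qq; case: (fk j a) => x y /=.
rewrite -[Num.conj _]/(conjc _); simpc.
by congr (_ +i* _); ring.
Qed.

Lemma outprob_gen S j : (forall a, tq a S = (complex.Re (tq a S))%:C) ->
  outprob m gamma O S j = \sum_a qq j a * complex.Re (tq a S).
Proof.
move=> H; rewrite /outprob kraus_fc adj_fc tr_sand.
have -> : \sum_a fk j a * Num.conj (fk j a) * tq a S =
   (\sum_a qq j a * complex.Re (tq a S))%:C.
  rewrite rmorph_sum; apply: eq_bigr => a _.
  by rewrite fk_conj {1}H rmorphM.
by [].
Qed.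

Lemma tq_post a rho j : tq a (poststate m gamma O rho j) =
  ((outprob m gamma O rho j)^-1 * qq j a)%:C * tq a rho.
Proof.
rewrite /poststate tqZ kraus_fc adj_fc tq_sand fk_conj.
by rewrite rmorphM fmorphV mulrA.
Qed.

Section State.
Variable rho : 'M[C]_d.
Hypothesis Hrho : is_state rho.

Definition w a := complex.Re (tq a rho).

Lemma w_ge0 a : 0 <= w a.
Proof. by have [] := tq_state a _ Hrho. Qed.

Lemma tqw a : tq a rho = (w a)%:C.
Proof. by have [] := tq_state a _ Hrho. Qed.

Lemma sum_w : \sum_a w a = 1.
Proof.
apply: complexI; rewrite rmorph_sum /=.
under eq_bigr do rewrite -tqw.
by rewrite tq_sum; case: Hrho.
Qed.

Lemma outprob_st j : outprob m gamma O rho j = \sum_a qq j a * w a.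
Proof. by apply: outprob_gen => a; rewrite tqw. Qed.

Lemma joint_st j k : jointprob m gamma O rho j k = \sum_a w a * qq j a * qq k a.
Proof.
rewrite /jointprob.
set p := outprob m gamma O rho j.
have Hp : p = \sum_a qq j a * w a by rewrite /p outprob_st.
have Ht : forall a, tq a (poststate m gamma O rho j) = (p^-1 * qq j a * w a)%:C.
  by move=> a; rewrite tq_post tqw -rmorphM.
rewrite outprob_gen; last by move=> a; rewrite Ht.
under eq_bigr do rewrite Ht /=.
have [p0|p0] := eqVneq p 0.
  rewrite p0 mul0r; symmetry; apply: big1 => a _.
  move: p0; rewrite Hp => /eqP; rewrite psumr_eq0; last first.
    by move=> b _; rewrite mulr_ge0 ?qq_ge0 ?w_ge0.
  move=> /allP /(_ a (mem_index_enum a)) /eqP h.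
  by rewrite [w a * _]mulrC h mul0r.
rewrite mulr_sumr; apply: eq_bigr => a _.
transitivity (p * p^-1 * (w a * qq j a * qq k a)); first ring.
by rewrite mulfV // mul1r.
Qed.
End State.

Hypothesis m0 : (0 < m)%N.
Hypothesis g0 : 0 < gamma.

Lemma ghat_gt0 x : 0 < ghat gamma x.
Proof.
rewrite /ghat mulr_gt0 ?expR_gt0 // sqrtr_gt0 mulr_gt0 // mulr_gt0 //.
by rewrite sqrtr_gt0 mulr_gt0 // pi_gt0.
Qed.

Definition sg2 := \sum_(1 <= l < NN m) ghat gamma (xi R m l) ^+ 2.

Lemma sg2_gt0 : 0 < sg2.
Proof.
rewrite /sg2 (bigD1_seq 1) ?iota_uniq //=; last by rewrite mem_index_iota NN_gt1.
by rewrite ltr_pwDl ?exprn_gt0 ?ghat_gt0 // sumr_ge0 // => l _; rewrite sqr_ge0.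
Qed.

Lemma kappa_alg (h S N : R) : 0 < h -> 0 < S -> h ^+ 2 * N = 1 ->
  (h * Num.sqrt h / Num.sqrt (h * S)) ^+ 2 * S * N = 1.
Proof.
move=> h0 s0 hN.
rewrite !exprMn exprVn !sqr_sqrtr ?mulr_ge0 ?ltW //.
rewrite -hN; field.
by rewrite gt_eqF // gt_eqF.
Qed.

Lemma kappa2 : (hh R m * Num.sqrt (hh R m) / Cnorm m gamma) ^+ 2 * sg2 * (NN m)%:R = 1.
Proof.
apply: kappa_alg; [exact: hh_gt0 | exact: sg2_gt0 | exact: hh2NN].
Qed.

Lemma conjR (x : R) : Num.conj (x%:C : C) = x%:C.
Proof. by rewrite -[Num.conj _]/(conjc _) conjc_real. Qed.

Lemma conjCM (x y : C) : Num.conj (x * y) = Num.conj x * Num.conj y.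
Proof. by rewrite rmorphM. Qed.

Lemma conjC_sum (I : Type) (r : seq I) (F : I -> C) :
  Num.conj (\sum_(i <- r) F i) = \sum_(i <- r) Num.conj (F i).
Proof. by rewrite rmorph_sum. Qed.

Lemma sum_qq a : \sum_(j < NN m) qq j a = 1.
Proof.
apply: complexI; rewrite rmorph_sum /=.
under eq_bigr do rewrite -fk_conj.
set k := hh R m * Num.sqrt (hh R m) / Cnorm m gamma.
set g := fun l => ghat gamma (xi R m l).
set th := fun (l j : nat) => 2 * pi * xi R m l * (omega R m j - lam a).
have E : forall j : 'I_(NN m), fk j a * Num.conj (fk j a) =
   (k ^+ 2)%:C * \sum_(1 <= l < NN m) \sum_(1 <= l' < NN m)
        (g l * g l')%:C * (Ex (th l j) * Ex (- th l' j)).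
  move=> j.
  have -> : fk j a = k%:C * \sum_(1 <= l < NN m) (g l)%:C * Ex (th l j) by [].
  rewrite conjCM conjR conjC_sum.
  rewrite mulrACA -rmorphM /= -expr2; congr (_ * _).
  rewrite mulr_suml; apply: eq_bigr => l _.
  rewrite mulr_sumr; apply: eq_bigr => l' _.
  rewrite conjCM conjR -ExN [in RHS]rmorphM /=.
  by ring.
under eq_bigr do rewrite E.
rewrite -mulr_sumr exchange_big /=.
under eq_bigr do rewrite exchange_big /=.
have F : forall l, l \in index_iota 1 (NN m) ->
   \sum_(1 <= l' < NN m) \sum_(j < NN m) (g l * g l')%:C * (Ex (th l j) * Ex (- th l' j))
   = (g l ^+ 2 * (NN m)%:R)%:C.
  move=> l hlm; have hl : (l < NN m)%N by move: hlm; rewrite mem_index_iota => /andP[].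
  rewrite big_seq (eq_bigr (fun l' => (g l * g l')%:C * (if l == l' then (NN m)%:R else 0))); last first.
    move=> l' hl'; rewrite -mulr_sumr /th dft //.
    by move: hl'; rewrite mem_index_iota => /andP[].
  rewrite -big_seq (bigD1_seq l) ?iota_uniq //= eqxx big1 ?addr0.
    by rewrite expr2 !rmorphM /= rmorph_nat.
  by move=> l' /negPf; rewrite eq_sym => ->; rewrite mulr0.
rewrite big_seq (eq_bigr _ F) -big_seq -rmorph_sum -rmorphM /=.
by rewrite -mulr_suml mulrA kappa2.
Qed.

Section Final.
Variable rho : 'M[C]_d.
Hypothesis Hrho : is_state rho.

Local Notation z j := (readout R m j).
Local Notation W := (w rho).

Definition mu a := \sum_(j < NN m) qq j a * z j.
Definition sq a := \sum_(j < NN m) qq j a * z j ^+ 2.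

Lemma exch3 (F : 'I_d -> 'I_(NN m) -> 'I_(NN m) -> R) :
  \sum_a \sum_j \sum_k F a j k = \sum_j \sum_k \sum_a F a j k.
Proof. rewrite exchange_big; apply: eq_bigr => j _; exact: exchange_big. Qed.

Lemma EZ_eq : EZ m gamma O rho = \sum_a W a * mu a.
Proof.
rewrite /EZ; under eq_bigr do rewrite (outprob_st _ Hrho) mulr_suml.
rewrite exchange_big; apply: eq_bigr => a _; rewrite /mu mulr_sumr.
by apply: eq_bigr => j _; ring.
Qed.

Lemma EZ'_eq : EZ' m gamma O rho = \sum_a W a * mu a.
Proof.
transitivity (\sum_a W a * (\sum_(j < NN m) qq j a) * mu a); last first.
  by apply: eq_bigr => a _; rewrite sum_qq mulr1.
rewrite /EZ'.
under eq_bigr do under eq_bigr do rewrite (joint_st _ Hrho) mulr_suml.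
rewrite -exch3; apply: eq_bigr => a _.
rewrite -mulrA mulr_suml mulr_sumr; apply: eq_bigr => j _.
rewrite /mu !mulr_sumr; apply: eq_bigr => k _.
ring.
Qed.

Lemma EZZ'_eq : EZZ' m gamma O rho = \sum_a W a * mu a ^+ 2.
Proof.
rewrite /EZZ'.
under eq_bigr do under eq_bigr do rewrite (joint_st _ Hrho) mulr_suml.
rewrite -exch3; apply: eq_bigr => a _.
rewrite expr2 /mu mulr_suml mulr_sumr; apply: eq_bigr => j _.
rewrite !mulr_sumr; apply: eq_bigr => k _.
ring.
Qed.

Lemma EZ2_eq : \sum_(j < NN m) outprob m gamma O rho j * z j ^+ 2 = \sum_a W a * sq a.
Proof.
under eq_bigr do rewrite (outprob_st _ Hrho) mulr_suml.
rewrite exchange_big; apply: eq_bigr => a _; rewrite /sq mulr_sumr.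
by apply: eq_bigr => j _; ring.
Qed.

Lemma final_ineq : `|CovZZ' m gamma O rho| <= VarZ m gamma O rho.
Proof.
rewrite /CovZZ' /VarZ EZ_eq EZ'_eq EZZ'_eq EZ2_eq.
set M := \sum_a W a * mu a.
have sw := sum_w _ Hrho.
have c0 : 0 <= \sum_a W a * mu a ^+ 2 - M ^+ 2.
  rewrite /M (var_eq _ _ _ _ sw) sumr_ge0 // => a _.
  by rewrite mulr_ge0 ?sqr_ge0 ?w_ge0.
rewrite ger0_norm // lerB // ler_sum // => a _.
rewrite ler_wpM2l ?w_ge0 // -subr_ge0 /sq /mu (var_eq _ _ _ _ (sum_qq a)) sumr_ge0 // => j _.
by rewrite mulr_ge0 ?sqr_ge0 ?qq_ge0.
Qed.
End Final.
End Mat.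


Theorem propositionD5 (R : realType) (d : nat) (O rho : 'M[Cx R]_d)
    (m : nat) (gamma : R) :
  hermitian_mx O -> opnorm_le1 O -> (0 < m)%N -> 0 < gamma -> is_state rho ->
  `|CovZZ' m gamma O rho| <= VarZ m gamma O rho.
Proof.
move=> HO _ m0 g0 Hrho.
by apply: final_ineq.
Qed.
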